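(* Let $k\ge 2$ and let $G$ be a finite simple graph admitting a closed neighborhood balanced $k$-coloring $c$ with color classes $V_1,\dots,V_k$. If $|V_i|=|V_j|$ for some $i,j$, then $|E(V_i,V_i)|=|E(V_j,V_j)|$.
   Context: For a vertex $v$, $N[v]=\{v\}\cup\{u : uv\in E(G)\}$. A closed neighborhood balanced $k$-coloring of $G$ is a map $c: V(G)\to\{1,\dots,k\}$ such that for every vertex $v$ the numbers $|\{u\in N[v] : c(u)=i\}|$, $i=1,\dots,k$, are all equal; its color classes are $V_i=c^{-1}(i)$. $E(X,X)$ denotes the set of edges with both endpoints in $X$. *)

(* Defs.v *)
From mathcomp Require Import all_boot.
Set Implicit Arguments. Unset Strict Implicit. Unset Printing Implicit Defensive.

Definition simple_graph (T : finType) (e : rel T) : Prop :=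
  symmetric e /\ irreflexive e.

Definition closed_nbhd (T : finType) (e : rel T) (v : T) : {set T} :=
  [set u | (u == v) || e v u].

(* Closed neighborhood balanced k-coloring c : T -> 'I_k (colors 1..k as 0..k-1). *)
Definition cnb_coloring (T : finType) (e : rel T) (k : nat) (c : T -> 'I_k) : Prop :=
  forall (v : T) (i j : 'I_k),
    #|[set u in closed_nbhd e v | c u == i]| = #|[set u in closed_nbhd e v | c u == j]|.

Definition color_class (T : finType) (k : nat) (c : T -> 'I_k) (i : 'I_k) : {set T} :=
  [set v | c v == i].

Definition edges_in (T : finType) (e : rel T) (X : {set T}) : {set {set T}} :=
  [set S : {set T} | [exists u in X, exists w in X, e u w && (S == [set u; w])]].

(* Main.v *)
Require Import Defs.
From mathcomp Require Import all_boot.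

Lemma card_as_sum (U : finType) (B : {set U}) : #|B| = \sum_u (u \in B : nat).
Proof. by rewrite -sum1_card big_mkcond /=; apply: eq_bigr => u _; case: (u \in B). Qed.

Section Aux.
Variables (T : finType) (e : rel T).
Hypothesis sym : symmetric e.
Hypothesis irr : irreflexive e.


Lemma card_split (k : nat) (c : T -> 'I_k) (A : {set T}) :
  #|A| = \sum_(j < k) #|[set u in A | c u == j]|.
Proof.
rewrite -sum1_card (partition_big c xpredT) //=.
apply: eq_bigr => j _; rewrite -sum1_card; apply: eq_bigl => u; by rewrite !inE.
Qed.

Lemma nbhd_sym u v : (u \in closed_nbhd e v) = (v \in closed_nbhd e u).
Proof. by rewrite !inE eq_sym sym. Qed.

Lemma double_count (k : nat) (c : T -> 'I_k) (i : 'I_k) :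
  \sum_v #|[set u in closed_nbhd e v | c u == i]| =
  \sum_(u in color_class c i) #|closed_nbhd e u|.
Proof.
under eq_bigr => v _ do rewrite card_as_sum.
rewrite exchange_big /= [RHS]big_mkcond /=.
apply: eq_bigr => u _; rewrite card_as_sum !inE.
case Hc: (c u == i); last by rewrite big1 // => v _; rewrite inE Hc andbF.
by apply: eq_bigr => v _; rewrite inE Hc andbT nbhd_sym.
Qed.

Lemma edge_count (X : {set T}) :
  \sum_(v in X) #|[set u in X | e v u]| = 2 * #|edges_in e X|.
Proof.
have step1 : forall v, v \in X ->
    #|[set u in X | e v u]| = #|[set S in edges_in e X | v \in S]|.
  move=> v vX.
  have -> : [set S in edges_in e X | v \in S] = (fun u => [set v; u]) @: [set u in X | e v u].
    apply/setP => S; rewrite !inE; apply/idP/idP.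
    - case/andP => /existsP [a /andP [aX /existsP [b /andP [bX /andP [eab /eqP ->]]]]].
      rewrite !inE => /orP [] /eqP ->.
        by apply/imsetP; exists b => //; rewrite inE bX eab.
      by apply/imsetP; exists a; [rewrite inE aX sym eab | rewrite setUC].
    - case/imsetP => u; rewrite inE => /andP [uX evu] ->.
      rewrite !inE eqxx andbT; apply/existsP; exists v; rewrite vX /=.
      by apply/existsP; exists u; rewrite uX evu eqxx.
  rewrite card_in_imset // => u w; rewrite !inE => /andP [_ evu] /andP [_ evw] Heq.
  have : w \in [set v; u] by rewrite Heq !inE eqxx orbT.
  rewrite !inE => /orP [] /eqP // wv.
  by move: evw; rewrite wv irr.
rewrite (eq_bigr _ step1).
have -> : \sum_(v in X) #|[set S in edges_in e X | v \in S]| =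
          \sum_v #|[set S in edges_in e X | v \in S]|.
  rewrite [RHS](bigID (mem X)) /= [X in _ = _ + X]big1 ?addn0 // => v vX.
  apply/eqP; rewrite cards_eq0; apply/eqP/setP => S; rewrite !inE.
  apply/negbTE/negP => /andP [/existsP [a /andP [aX /existsP [b /andP [bX /andP [_ /eqP HS]]]]]].
  by rewrite HS !inE => /orP [] /eqP Hv; move: vX; rewrite Hv ?aX ?bX.
under eq_bigr => v _ do rewrite card_as_sum.
rewrite exchange_big /= (bigID (mem (edges_in e X))) /= [X in _ + X]big1; last first.
  by move=> S SE; apply: big1 => v _; rewrite inE (negbTE SE).
rewrite addn0 mulnC -sum_nat_const.
apply: eq_bigr => S SE.
have -> : \sum_v (S \in [set S0 in edges_in e X | v \in S0] : nat) = #|S|.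
  by rewrite card_as_sum; apply: eq_bigr => v _; rewrite inE SE.
move: SE; rewrite inE => /existsP [a /andP [aX /existsP [b /andP [bX /andP [eab /eqP ->]]]]].
rewrite cards2; case: eqP => // ab; by move: eab; rewrite ab irr.
Qed.

End Aux.

Theorem corollary2p9 (k : nat) (T : finType) (e : rel T) (c : T -> 'I_k) :
  2 <= k ->
  simple_graph e ->
  cnb_coloring e c ->
  forall i j : 'I_k,
    #|color_class c i| = #|color_class c j| ->
    #|edges_in e (color_class c i)| = #|edges_in e (color_class c j)|.
Proof.
move=> k2 [sym irr] cnb i j Hij.
set cnt := fun v x => #|[set u in closed_nbhd e v | c u == x]|.
have H1 : forall v, #|closed_nbhd e v| = k * cnt v i.
  move=> v; rewrite (@card_split _ _ c) (eq_bigr (fun _ => cnt v i)).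
    by rewrite sum_nat_const card_ord.
  by move=> x _; rewrite /cnt (cnb v x i).
have H2 : forall x, \sum_v cnt v i = k * \sum_(u in color_class c x) cnt u i.
  move=> x; rewrite (eq_bigr (fun v => cnt v x)); last by move=> v _; rewrite /cnt (cnb v i x).
  by rewrite (@double_count _ _ sym) big_distrr /=; apply: eq_bigr => u _; rewrite H1.
have Hs : \sum_(u in color_class c i) cnt u i = \sum_(u in color_class c j) cnt u i.
  apply/eqP; rewrite -(eqn_pmul2l (ltnW k2)) -!H2 //.
have H3 : forall x, \sum_(u in color_class c x) cnt u i =
                    #|color_class c x| + 2 * #|edges_in e (color_class c x)|.
  move=> x; rewrite -(@edge_count _ _ sym irr) -sum1_card -big_split /=.
  apply: eq_bigr => v vx; rewrite /cnt (cnb v i x).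
  have -> : [set u in closed_nbhd e v | c u == x] = v |: [set u in color_class c x | e v u].
    apply/setP => u; rewrite !inE; move: vx; rewrite inE => /eqP <-.
    by case: (eqVneq u v) => [->|_]; rewrite ?eqxx ?irr //= andbC.
  by rewrite cardsU1 inE irr andbF.
by move: Hs; rewrite !H3 Hij => /eqP; rewrite eqn_add2l eqn_pmul2l // => /eqP.
Qed.
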